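(* Let $I\subseteq R$ be a good ideal. For each $i\in\{1,\dots,n\}$ let $e_i$ be the $i$-th standard unit vector of $\mathbb N^n$ and let $q_i$ be the smallest nonnegative integer such that $I_{te_i}=I_{q_ie_i}$ for all integers $t\ge q_i$ (such $q_i$ exists). Then the Ratliff--Rush closure of $I$ is $$\tilde I=I_{q_1,0,\dots,0}\cap I_{0,q_2,0,\dots,0}\cap\cdots\cap I_{0,\dots,0,q_n}.$$
   Context: Let $\mathbb K$ be a field, $R=\mathbb K[x_1,\dots,x_n]$, $\mathfrak m=\langle x_1,\dots,x_n\rangle$, $\mathbb N=\{0,1,2,\dots\}$. A monomial $x_1^{\alpha_1}\cdots x_n^{\alpha_n}$ is identified with the point $(\alpha_1,\dots,\alpha_n)\in\mathbb N^n$. For a monomial ideal $I$, $G(I)$ denotes its (unique) minimal monomial generating set. If $I$ is an $\mathfrak m$-primary monomial ideal, then for each $i$ there is a unique $d_i\ge1$ with $x_i^{d_i}\in G(I)$; write $\mu_i=x_i^{d_i}$. For $(a_1,\dots,a_n)\in\mathbb N^n$ the box associated to $I$ is $B_{a_1,\dots,a_n}=([a_1d_1,(a_1+1)d_1]\times\cdots\times[a_nd_n,(a_n+1)d_n])\cap\mathbb N^n$; a monomial belongs to a box if its exponent vector does. An $\mathfrak m$-primary monomial ideal $I$ is called good if for every integer $l\ge1$, every element of $G(I^l)$ belongs to some box $B_{a_1,\dots,a_n}$ with $a_1+\dots+a_n=l-1$. For a good ideal $I$ and $a=(a_1,\dots,a_n)\in\mathbb N^n$, with $l=a_1+\dots+a_n+1$,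 define $I_{a}=I_{a_1,\dots,a_n}=\left\langle \frac{m}{\mu_1^{a_1}\cdots\mu_n^{a_n}} : m\in B_{a_1,\dots,a_n}\cap G(I^l)\right\rangle$. The Ratliff--Rush closure of a regular ideal $I$ is $\tilde I=\bigcup_{k\ge0}(I^{k+1}:I^k)$. *)

(* Defs.v *)
(* Monomial ideals of K[x_1..x_n] are represented by their
   sets of exponent vectors (upward-closed subsets of N^n). *)
From mathcomp Require Import all_boot.
Set Implicit Arguments. Unset Strict Implicit. Unset Printing Implicit Defensive.

Definition mon (n : nat) := {ffun 'I_n -> nat}.

Definition mdiv n (a b : mon n) : Prop := forall i, a i <= b i.
Definition mmul n (a b : mon n) : mon n := [ffun i => a i + b i].
Definition mpure n (i : 'I_n) (k : nat) : mon n := [ffun j => if j == i then k else 0].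
Definition mone n : mon n := [ffun _ => 0].

Definition mset n := mon n -> Prop.

Definition is_mideal n (S : mset n) : Prop :=
  forall a b, S a -> mdiv a b -> S b.

Definition mgen n (G : mset n) : mset n := fun c => exists2 a, G a & mdiv a c.

Definition mingens n (S : mset n) : mset n :=
  fun a => S a /\ forall b, S b -> mdiv b a -> b = a.

Definition mtop n : mset n := fun _ => True.
Definition mprod n (S T : mset n) : mset n :=
  fun c => exists a b, [/\ S a, T b & mdiv (mmul a b) c].
Fixpoint mpow n (S : mset n) (l : nat) : mset n :=
  if l is l'.+1 then mprod S (mpow S l') else @mtop n.
Definition mcolon n (S T : mset n) : mset n :=
  fun c => forall b, T b -> S (mmul c b).

Definition ratliff_rush n (S : mset n) : mset n :=
  fun c => exists k, mcolon (mpow S k.+1) (mpow S k) c.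

Definition mprimary n (S : mset n) : Prop :=
  ~ S (mone n) /\ forall i, exists k, S (mpure i k).

Definition pure_gens n (S : mset n) (d : 'I_n -> nat) : Prop :=
  forall i, 0 < d i /\ mingens S (mpure i (d i)).

Definition inbox n (d : 'I_n -> nat) (a m : mon n) : Prop :=
  forall i, a i * d i <= m i <= (a i).+1 * d i.

Definition msum n (a : mon n) : nat := \sum_(i < n) a i.

Definition good n (S : mset n) (d : 'I_n -> nat) : Prop :=
  forall l, 0 < l -> forall m, mingens (mpow S l) m ->
    exists a : mon n, msum a = l.-1 /\ inbox d a m.

(* I_a : generated by m / mu^a for m in B_a ∩ G(I^l), l = |a| + 1 *)
Definition Ia n (S : mset n) (d : 'I_n -> nat) (a : mon n) : mset n :=
  mgen (fun c => exists2 m, mingens (mpow S (msum a).+1) m /\ inbox d a m &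
                   c = [ffun i => m i - a i * d i]).

Definition mseteq n (S T : mset n) : Prop := forall c, S c <-> T c.

Definition stable_from n (S : mset n) (d : 'I_n -> nat) (i : 'I_n) (q : nat) : Prop :=
  forall t, q <= t -> mseteq (Ia S d (mpure i t)) (Ia S d (mpure i q)).

(* Main.v *)
From Stdlib Require Import Classical ClassicalEpsilon.
Require Import Defs.
From mathcomp Require Import all_boot zify.
Set Implicit Arguments. Unset Strict Implicit. Unset Printing Implicit Defensive.


Section Basics.
Variable n : nat.
Implicit Types a b c x y : mon n.

Lemma mdiv_refl a : mdiv a a. Proof. by move=> i. Qed.
Lemma mdiv_trans a b c : mdiv a b -> mdiv b c -> mdiv a c.
Proof. by move=> h1 h2 i; apply: leq_trans (h1 i) (h2 i). Qed.
Lemma mmulC a b : mmul a b = mmul b a.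
Proof. by apply/ffunP=> i; rewrite !ffunE addnC. Qed.
Lemma mmulA a b c : mmul a (mmul b c) = mmul (mmul a b) c.
Proof. by apply/ffunP=> i; rewrite !ffunE addnA. Qed.
Lemma mdiv_mmul a b a' b' : mdiv a a' -> mdiv b b' -> mdiv (mmul a b) (mmul a' b').
Proof. by move=> h1 h2 i; rewrite !ffunE leq_add. Qed.
Lemma mdiv_mmulr a b : mdiv b (mmul a b).
Proof. by move=> i; rewrite ffunE leq_addl. Qed.
Lemma mdiv_mmull a b : mdiv a (mmul a b).
Proof. by move=> i; rewrite ffunE leq_addr. Qed.
Lemma mmul0 a : mmul (mone n) a = a.
Proof. by apply/ffunP=> i; rewrite !ffunE. Qed.

Lemma mpow_ideal (S : mset n) l x y : mpow S l x -> mdiv x y -> mpow S l y.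
Proof.
case: l => [//|l] /= [a [b [h1 h2 h3]]] hd.
by exists a, b; split=> //; apply: mdiv_trans hd.
Qed.

Lemma mpow_dec (S : mset n) p q x : p <= q -> mpow S q x -> mpow S p x.
Proof.
move=> /subnK <-; elim: (q - p) x => [|k IH] x //=.
move=> [a [b [h1 h2 h3]]]; apply: IH.
exact: mpow_ideal h2 (mdiv_trans (mdiv_mmulr a b) h3).
Qed.

Lemma mpow_add (S : mset n) p q x y :
  is_mideal S -> mpow S p x -> mpow S q y -> mpow S (p + q) (mmul x y).
Proof.
move=> hS; elim: p x => [|p IH] x /=.
  by move=> _ hy; apply: mpow_ideal hy (mdiv_mmulr _ _).
move=> [a [b [h1 h2 h3]]] hy.
exists a, (mmul b y); split=> //; first exact: IH.
by rewrite mmulA; apply: mdiv_mmul.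
Qed.

End Basics.

Section Weights.
Variable n : nat.

Lemma sum_strict (w : 'I_n -> nat) (b x : mon n) : (forall k, 0 < w k) ->
  mdiv b x -> b <> x -> \sum_k b k * w k < \sum_k x k * w k.
Proof.
move=> hw hbx hne.
case: (pickP (fun k => b k != x k)) => [k0 hk0 | h]; last first.
  by exfalso; apply: hne; apply/ffunP=> k; move: (h k) => /= /negbFE/eqP.
rewrite (bigD1 k0) //= [X in _ < X](bigD1 k0) //=.
have h1 : b k0 * w k0 < x k0 * w k0.
  by rewrite ltn_pmul2r // ltn_neqAle hk0 hbx.
have h2 : \sum_(i < n | i != k0) b i * w i <= \sum_(i < n | i != k0) x i * w i.
  by apply: leq_sum => i _; rewrite leq_mul2r hbx orbT.
exact: leq_add h1 h2.
Qed.

Lemma msum1 (x : mon n) : \sum_k x k * 1 = msum x.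
Proof. by apply: eq_bigr => k _; rewrite muln1. Qed.

Lemma min_below (S : mset n) x : S x -> exists2 m, mingens S m & mdiv m x.
Proof.
move: {2}(msum x) (leqnn (msum x)) => N; elim: N x => [|N IH] x hN hx.
  exists x => //; split=> // b hb hbx; apply: NNPP => hne.
  have := sum_strict (w := fun _ => 1) (fun _ => erefl) hbx hne.
  rewrite !msum1; lia.
case: (classic (mingens S x)) => hm; first by exists x => //; apply: mdiv_refl.
have [b [hb hbx hne]] : exists b, [/\ S b, mdiv b x & b <> x].
  apply: NNPP => hno; apply: hm; split=> // b hb hbx; apply: NNPP => hne.
  by apply: hno; exists b.
have := sum_strict (w := fun _ => 1) (fun _ => erefl) hbx hne.
rewrite !msum1 => hlt.
have hb' : msum b <= N by lia.
have [m hm1 hm2] := IH b hb' hb.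
by exists m => //; exact: mdiv_trans hm2 hbx.
Qed.
End Weights.

Section Main.
Variable n : nat.
Variable I : mset n.
Variable d : 'I_n -> nat.
Hypothesis hI : is_mideal I.
Hypothesis hpg : pure_gens I d.
Hypothesis hgood : good I d.

Definition D := \prod_(k < n) d k.
Definition wt (x : mon n) := \sum_k x k * (D %/ d k).
Definition mscale (N : nat) (x : mon n) : mon n := [ffun k => N * x k].
Definition muv (a : mon n) : mon n := [ffun k => a k * d k].

Lemma d_gt0 k : 0 < d k. Proof. by case: (hpg k). Qed.
Lemma D_gt0 : 0 < D. Proof. by apply: prodn_gt0 => k; apply: d_gt0. Qed.
Lemma dvd_dD k : d k %| D.
Proof. by rewrite /D (bigD1 k) //= dvdn_mulr. Qed.
Lemma divD k : D %/ d k * d k = D. Proof. by rewrite divnK // dvd_dD. Qed.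
Lemma w_gt0 k : 0 < D %/ d k.
Proof. by rewrite divn_gt0 ?d_gt0 // dvdn_leq ?D_gt0 ?dvd_dD. Qed.
Lemma mu_in k : I (mpure k (d k)). Proof. by case: (hpg k) => _ []. Qed.

Lemma wt_mmul a b : wt (mmul a b) = wt a + wt b.
Proof. by rewrite /wt -big_split; apply: eq_bigr => k _; rewrite ffunE mulnDl. Qed.
Lemma wt_mono a b : mdiv a b -> wt a <= wt b.
Proof. by move=> h; apply: leq_sum => k _; rewrite leq_mul2r h orbT. Qed.
Lemma wt_eq b m : mdiv b m -> wt m <= wt b -> b = m.
Proof.
move=> h1 h2; apply: NNPP => hne.
have := sum_strict w_gt0 h1 hne; rewrite -/(wt b) -/(wt m); lia.
Qed.
Lemma wt_pure i k : wt (mpure i k) = k * (D %/ d i).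
Proof.
rewrite /wt (bigD1 i) //= big1 ?addn0 ?ffunE ?eqxx // => j hj.
by rewrite ffunE (negbTE hj).
Qed.
Lemma wt_muv a : wt (muv a) = D * msum a.
Proof.
rewrite /wt /msum big_distrr; apply: eq_bigr => k _.
by rewrite ffunE -mulnA [d k * _]mulnC divD; apply: mulnC.
Qed.
Lemma wt_scale N x : wt (mscale N x) = N * wt x.
Proof.
rewrite /wt big_distrr; apply: eq_bigr => k _; by rewrite ffunE -mulnA.
Qed.

Lemma mpow_scale N x : I x -> mpow I N (mscale N x).
Proof.
move=> hx; elim: N => [|N IH] //=.
exists x, (mscale N x); split=> // k; rewrite !ffunE mulSn.
by [].
Qed.

Lemma wt_I x : I x -> D <= wt x.
Proof.
move=> hx; apply: NNPP => /negP; rewrite -ltnNge => hlt.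
have hp := mpow_scale D.+1 hx.
have [m hm hmx] := min_below hp.
have [a [ha hb]] := hgood (ltn0Sn D) hm.
have h1 : mdiv (muv a) m by move=> k; rewrite ffunE; case/andP: (hb k).
have := wt_mono h1; rewrite wt_muv ha /=.
have := wt_mono hmx; rewrite wt_scale.
have := D_gt0; nia.
Qed.

Lemma wt_pow l x : mpow I l x -> l * D <= wt x.
Proof.
elim: l x => [|l IH] x //= [a [b [h1 h2 h3]]].
have := wt_mono h3; rewrite wt_mmul.
have := wt_I h1; have := IH _ h2; lia.
Qed.

End Main.

Section Strip.
Variable n : nat.
Variable I : mset n.
Variable d : 'I_n -> nat.
Hypothesis hI : is_mideal I.
Hypothesis hpg : pure_gens I d.
Hypothesis hgood : good I d.
Variable i : 'I_n.

Definition Jt t (c : mon n) := mpow I t.+1 (mmul c (mpure i (t * d i))).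

Lemma msum_pure (j : 'I_n) t : msum (mpure j t) = t.
Proof.
rewrite /msum (bigD1 j) //= big1 ?addn0 ?ffunE ?eqxx // => k hk.
by rewrite ffunE (negbTE hk).
Qed.

Lemma mpow_pure (j : 'I_n) t : mpow I t (mpure j (t * d j)).
Proof.
elim: t => [|t IH] //=.
exists (mpure j (d j)), (mpure j (t * d j)); split=> //; first exact: (@mu_in n I d hpg j).
by move=> k; rewrite !ffunE; case: (k == j).
Qed.

Lemma I_J t (c : mon n) : I c -> Jt t c.
Proof.
move=> hc; rewrite /Jt /=; exists c, (mpure i (t * d i)); split.
- exact: hc.
- exact: mpow_pure.
- exact: mdiv_refl.
Qed.

Lemma J_mono t (c : mon n) : Jt t c -> Jt t.+1 c.
Proof.
move=> h; rewrite /Jt /=; exists (mpure i (d i)), (mmul c (mpure i (t * d i))); split.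
- exact: (@mu_in n I d hpg i).
- exact: h.
by move=> k; rewrite !ffunE; case: (k == i); lia.
Qed.

Lemma J_mono_le t t' (c : mon n) : t <= t' -> Jt t c -> Jt t' c.
Proof.
move=> /subnK <-; elim: (t' - t) => [|k IH] //= h.
by apply: J_mono; apply: IH.
Qed.

Lemma Ia_up (a c c' : mon n) : Ia I d a c -> mdiv c c' -> Ia I d a c'.
Proof. by move=> [g hg hgc] hc; exists g => //; apply: mdiv_trans hc. Qed.

Lemma Ia_J t (c : mon n) : Ia I d (mpure i t) c -> Jt t c.
Proof.
move=> [g [m [hm hb] ->] hgc]; rewrite msum_pure in hm.
apply: mpow_ideal (proj1 hm) _ => k.
move: (hgc k) (hb k); rewrite !ffunE; case: (eqVneq k i) => [->|hk]; rewrite ?eqxx ?(negbTE hk) /=; lia.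
Qed.

Lemma mu_Ia t (j : 'I_n) : Ia I d (mpure i t) (mpure j (d j)).
Proof.
set m := mmul (mpure j (d j)) (mpure i (t * d i)).
have hm : mpow I t.+1 m.
  exists (mpure j (d j)), (mpure i (t * d i)); split; first exact: (@mu_in n I d hpg j).
    exact: mpow_pure.
  exact: mdiv_refl.
have hwm : wt d m = t.+1 * D d.
  rewrite wt_mmul !wt_pure [d j * _]mulnC divD -mulnA [d i * _]mulnC divD.
  by rewrite mulSn.
exists [ffun k => m k - mpure i t k * d k].
  exists m => //.
  rewrite msum_pure; split; last first.
    move=> k; rewrite /m !ffunE.
    case: (eqVneq k i) => [<-|hki]; case: (eqVneq k j) => [<-|hkj];
      rewrite ?eqxx ?(negbTE hki) ?(negbTE hkj) /=; lia.
  split=> // b hb hbm; apply: (wt_eq hpg) => //.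
  by rewrite hwm; apply: (wt_pow hpg hgood).
move=> k; rewrite /m !ffunE.
case: (eqVneq k i) => [<-|hki]; case: (eqVneq k j) => [<-|hkj];
  rewrite ?eqxx ?(negbTE hki) ?(negbTE hkj) /=; lia.
Qed.

Lemma strip t (c : mon n) : (forall j, j != i -> c j < d j) -> Jt t c -> Ia I d (mpure i t) c.
Proof.
move=> hs hJ.
have [m hm hmc] := @min_below n (mpow I t.+1) _ hJ.
have [b [hb hbox]] := hgood (ltn0Sn t) hm.
have hb0 : forall k, k != i -> b k = 0.
  move=> k hk; move: (hbox k) (hmc k) (hs k hk) (d_gt0 hpg k).
  rewrite !ffunE (negbTE hk) /=; case: (b k) => //= b' /andP[h1 _] h2 h3 h4.
  nia.
have hbe : b = mpure i t.
  apply/ffunP=> k; rewrite ffunE; case: (eqVneq k i) => [->|hk]; last exact: hb0.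
  by move: hb; rewrite /msum (bigD1 i) //= big1 ?addn0.

subst b.
exists [ffun k => m k - mpure i t k * d k].
  by exists m => //; rewrite msum_pure.
move=> k; move: (hmc k); rewrite !ffunE; case: (eqVneq k i) => [<-|hki]; rewrite ?eqxx ?(negbTE hki) /=; lia.
Qed.

Lemma J_Ia t (c : mon n) : Jt t c -> Ia I d (mpure i t) c.
Proof.
move=> hJ.
case: (pickP (fun j => (j != i) && (d j <= c j))) => [j /andP[hji hj] | hno].
  apply: Ia_up (mu_Ia t j) _ => k; rewrite ffunE.
  by case: (eqVneq k j) => [->|//]; rewrite hj.
apply: strip hJ => j hj; move: (hno j); rewrite hj /= => /negbT.
by rewrite -ltnNge.
Qed.

End Strip.

Definition asb (P : Prop) : bool := if excluded_middle_informative P then true else false.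
Lemma asbP (P : Prop) : reflect P (asb P).
Proof. by rewrite /asb; case: excluded_middle_informative => h; constructor. Qed.

Lemma nat_min (f : nat -> nat) : exists q, forall t, f q <= f t.
Proof.
suff H : forall v t, f t <= v -> exists q, forall t, f q <= f t.
  exact: (H (f 0) 0 (leqnn _)).
elim=> [|v IH] t ht.
  by exists t => t'; move: ht; rewrite leqn0 => /eqP ->.
case: (classic (forall t', f t <= f t')) => h; first by exists t.
have [t' ht'] : exists t', f t' < f t.
  apply: NNPP => hno; apply: h => t'; rewrite leqNgt; apply/negP => hlt.
  by apply: hno; exists t'.
apply: (IH t'); lia.
Qed.

Lemma stab n (J : nat -> mon n -> Prop) (P : mon n -> Prop) (B : nat) :
  (forall t c, J t c -> J t.+1 c) -> (forall t c, P c -> J t c) ->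
  (forall c, ~ P c -> forall k, c k < B) ->
  exists q, forall t, q <= t -> forall c, J t c <-> J q c.
Proof.
move=> hmono hP hB.
have hle : forall t t' c, t <= t' -> J t c -> J t' c.
  move=> t t' c /subnK <-; elim: (t' - t) => [|k IH] //= h.
  by apply: hmono; apply: IH.
pose emb (x : {ffun 'I_n -> 'I_B}) : mon n := [ffun k => val (x k)].
pose A t := [pred x : {ffun 'I_n -> 'I_B} | ~~ asb (J t (emb x))].
have [q hq] := nat_min (fun t => #|A t|).
exists q => t hqt c; split; last exact: hle.
move=> hJt; apply: NNPP => hJq.
have hsub : A t \subset A q.
  apply/subsetP => x; rewrite !inE => /asbP hx; apply/asbP => hx'.
  by apply: hx; apply: hle hx'.
have hcard : #|A t| = #|A q|.
  by apply/eqP; rewrite eqn_leq subset_leq_card // hq.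
have hAeq := subset_cardP hcard hsub.
have hnP : ~ P c by move=> hc; apply: hJq; apply: hP.
pose x : {ffun 'I_n -> 'I_B} := [ffun k => Ordinal (hB c hnP k)].
have hx : emb x = c by apply/ffunP => k; rewrite !ffunE.
have : x \in A q by rewrite inE hx; apply/asbP.
rewrite -hAeq inE hx => /asbP; apply.
exact: hJt.
Qed.

Lemma pigeon (T : eqType) (U hs : seq T) N :
  {subset hs <= U} -> (forall v, count_mem v hs <= N) -> size hs <= size U * N.
Proof.
elim: U hs => [|u U IH] hs hsub hc.
  by case: hs hsub hc => // x s /(_ x); rewrite mem_head => /(_ isT).
rewrite -(count_predC (pred1 u) hs) /= mulSn.
apply: leq_add; first exact: hc.
rewrite -size_filter; apply: IH.
  move=> x; rewrite mem_filter => /andP[hxu hx].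
  move: (hsub x hx); rewrite inE => /orP[/eqP e|//]; by rewrite e /= eqxx in hxu.
move=> v; apply: leq_trans (hc v); rewrite count_filter.
by apply: sub_count => x /= /andP[].
Qed.

Section RR.
Variable n : nat.
Hypothesis hn : 0 < n.
Variable I : mset n.
Variable d : 'I_n -> nat.
Hypothesis hI : is_mideal I.
Hypothesis hpg : pure_gens I d.
Hypothesis hgood : good I d.

Definition lsum (hs : seq (mon n)) := foldr (@mmul n) (mone n) hs.

Lemma normalize a : I a -> exists h, [/\ I h, mdiv h a & forall k, h k <= d k].
Proof.
move=> ha; case: (pickP (fun k => d k <= a k)) => [k hk | hno].
  exists (mpure k (d k)); split; first exact: (@mu_in n I d hpg k).
    by move=> j; rewrite ffunE; case: (eqVneq j k) => [->|//]; rewrite hk.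
  by move=> j; rewrite ffunE; case: (eqVneq j k) => [->|//].
exists a; split; [exact: ha | exact: mdiv_refl | ].
by move=> k; move: (hno k) => /= /negbT; rewrite -ltnNge => /ltnW.
Qed.

Lemma list_rep k p : mpow I k p -> exists hs : seq (mon n),
  [/\ size hs = k, forall h, h \in hs -> I h /\ forall j, h j <= d j & mdiv (lsum hs) p].
Proof.
elim: k p => [|k IH] p /=.
  by move=> _; exists [::]; split=> // j; rewrite ffunE.
move=> [a [b [ha hb hab]]].
have [h [hh hha hhd]] := normalize ha.
have [hs [hs1 hs2 hs3]] := IH b hb.
exists (h :: hs); split; first by rewrite /= hs1.
  by move=> x; rewrite inE => /orP[/eqP ->|]; [ | apply: hs2].
apply: mdiv_trans hab; exact: mdiv_mmul.
Qed.

Lemma lsum_pow hs : (forall h, h \in hs -> I h) -> mpow I (size hs) (lsum hs).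
Proof.
elim: hs => [|h hs IH] //= hall.
exists h, (lsum hs); split; first by apply: hall; rewrite mem_head.
  by apply: IH => x hx; apply: hall; rewrite inE hx orbT.
exact: mdiv_refl.
Qed.

Lemma extract (v : mon n) hs N : N <= count_mem v hs -> exists rest,
  [/\ size rest + N = size hs, {subset rest <= hs} &
      lsum hs = mmul (mscale N v) (lsum rest)].
Proof.
elim: hs N => [|x hs IH] N /=.
  rewrite leqn0 => /eqP ->; exists [::]; split=> //.
  by apply/ffunP=> k; rewrite !ffunE.
case: (eqVneq x v) => [->|hxv] /=.
  case: N => [|N] hN.
    exists (v :: hs); split=> //; first by rewrite addn0.
    by apply/ffunP=> k; rewrite !ffunE.
  have [rest [h1 h2 h3]] := IH N hN.
  exists rest; split; first by rewrite /= -h1 addnS.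
    by move=> y hy; rewrite inE h2 ?orbT.
  by rewrite h3; apply/ffunP=> k; rewrite !ffunE mulSn addnA.
rewrite add0n => hN.
have [rest [h1 h2 h3]] := IH N hN.
exists (x :: rest); split; first by rewrite /= -h1 addSn.
  by move=> y; rewrite !inE => /orP[->|/h2 ->]; rewrite ?orbT.
by rewrite /= h3; apply/ffunP=> k; rewrite !ffunE; lia.
Qed.

Lemma split_a (a : mon n) (i : 'I_n) t : t <= a i ->
  let a' := [ffun k => if k == i then a k - t else a k] in
  muv d a = mmul (mpure i (t * d i)) (muv d a') /\ msum a = t + msum a'.
Proof.
move=> hti a'; split.
  apply/ffunP=> k; rewrite !ffunE.
  case: (eqVneq k i) => [->|hki] /=; last by [].
  by rewrite -mulnDl subnKC.
rewrite /msum (bigD1 i) //= [X in _ = _ + X](bigD1 i) //= ffunE eqxx.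
rewrite addnA subnKC //; congr (_ + _); apply: eq_bigr => k hk.
by rewrite ffunE (negbTE hk).
Qed.

Lemma muvQ (a : mon n) : mpow I (msum a) (muv d a).
Proof.
move hs: (msum a) => s; elim: s a hs => [|s IH] a hs /=.
  by [].
have [i hi] : exists i, 0 < a i.
  apply: NNPP => hno; move: hs; rewrite /msum big1 // => k _.
  by apply/eqP; rewrite -leqn0 leqNgt; apply/negP => h; apply: hno; exists k.
have [h1 h2] := split_a hi.
rewrite h1; exists (mpure i (1 * d i)), (muv d [ffun k => if k == i then a k - 1 else a k]).
split; first by rewrite mul1n; exact: (@mu_in n I d hpg i).
  by apply: IH; move: hs; rewrite h2; lia.
exact: mdiv_refl.
Qed.

Lemma lemC t c (a : mon n) : (forall i, Jt I d i t c) -> n * t <= msum a ->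
  mpow I (msum a).+1 (mmul c (muv d a)).
Proof.
move=> hJ hsum.
have [i hi] : exists i, t <= a i.
  case: t hJ hsum => [|t] hJ hsum; first by exists (Ordinal hn).
  apply: NNPP => hno.
  have : msum a <= \sum_(k < n) t.
    apply: leq_sum => k _; rewrite -ltnS ltnNge; apply/negP => h.
    by apply: hno; exists k.
  by rewrite sum_nat_const card_ord; nia.
have [h1 h2] := split_a hi.
rewrite h1 h2 mmulA -addSn.
apply: mpow_add => //; first exact: hJ.
exact: muvQ.
Qed.

Lemma lemCv t c (v : mon n) : (forall i, Jt I d i t c) -> I v ->
  mpow I (D d * (n * t)).+1 (mmul c (mscale (D d * (n * t)) v)).
Proof.
move=> hJ hv.
set M := n * t.
pose a : mon n := [ffun k => M * (D d %/ d k) * v k].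
have hmuv : muv d a = mscale (D d * M) v.
  apply/ffunP=> k; rewrite !ffunE -[M * _ * v k * d k]mulnA [v k * d k]mulnC mulnA.
  by rewrite -[M * _ * d k]mulnA divD [M * D d]mulnC.
have hsa : msum a = M * wt d v.
  rewrite /msum /wt big_distrr; apply: eq_bigr => k _ /=; rewrite ffunE; lia.
have hw := wt_I hpg hgood hv.
have := @lemC t c a hJ.
rewrite hmuv hsa => H.
apply: (@mpow_dec _ _ _ (M * wt d v).+1); first by rewrite ltnS; nia.
apply: H; have := D_gt0 hpg; nia.
Qed.

End RR.

Lemma RR_of_J n (hn : 0 < n) (I : mset n) (d : 'I_n -> nat) :
  is_mideal I -> pure_gens I d -> good I d ->
  forall t c, 0 < t -> (forall i, Jt I d i t c) -> ratliff_rush I c.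
Proof.
move=> hI hpg hgood t c ht hJ.
set N := D d * (n * t).
have hN : 0 < N by rewrite /N; have := D_gt0 hpg; nia.
set B := \max_(k < n) d k.
pose U : seq (mon n) := map (fun x : {ffun 'I_n -> 'I_B.+1} => [ffun k => nat_of_ord (x k)])
  (enum {ffun 'I_n -> 'I_B.+1}).
have hU : forall h : mon n, (forall j, h j <= d j) -> h \in U.
  move=> h hh.
  have -> : h = (fun x : {ffun 'I_n -> 'I_B.+1} => [ffun k => nat_of_ord (x k)])
                  [ffun k => inord (h k)].
    apply/ffunP=> k; rewrite !ffunE inordK //.
    by rewrite ltnS; apply: leq_trans (hh k) (leq_bigmax (F := d) k).
  by apply: map_f; rewrite mem_enum.
exists (size U * N.-1).+1 => p hp.
have [hs [hs1 hs2 hs3]] := list_rep hpg hp.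
have [v hv] : exists v, N <= count_mem v hs.
  apply: NNPP => hno.
  have : size hs <= size U * N.-1.
    apply: pigeon.
      by move=> h hh; apply: hU; case: (hs2 h hh).
    move=> v; rewrite -ltnS prednK //; rewrite ltnNge; apply/negP => h.
    by apply: hno; exists v.
  by rewrite hs1 ltnn.
have hvin : v \in hs by rewrite -has_pred1 has_count; lia.
have hIv : I v by case: (hs2 v hvin).
have [rest [h1 h2 h3]] := extract hn hv.
apply: mpow_ideal (mdiv_mmul (mdiv_refl c) hs3).
rewrite h3 mmulA.
have -> : (size U * N.-1).+2 = N.+1 + size rest by rewrite -hs1 -h1; lia.
apply: mpow_add => //.
  exact: (lemCv hn hI hpg hgood hJ hIv).
apply: lsum_pow => h hh; case: (hs2 h (h2 h hh)) => //.
Qed.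

Theorem mainTheorem10 (n : nat) (hn : 0 < n) (I : mset n) (d : 'I_n -> nat) :
  is_mideal I -> mprimary I -> pure_gens I d -> good I d ->
  (forall i : 'I_n, exists q, stable_from I d i q) /\
  (forall q : 'I_n -> nat,
     (forall i, stable_from I d i (q i) /\
                forall q', stable_from I d i q' -> q i <= q') ->
     mseteq (ratliff_rush I)
            (fun c => forall i : 'I_n, Ia I d (mpure i (q i)) c)).
Proof.
move=> hI _ hpg hgood.
have hIaJ : forall i t c, Ia I d (mpure i t) c <-> Jt I d i t c.
  move=> i t c; split; first exact: Ia_J.
  exact: (J_Ia hpg hgood).
split.
  move=> i.
  have hB : forall c : mon n, ~ I c -> forall k, c k < \max_(k < n) d k.
    move=> c hc k; rewrite ltnNge; apply/negP => hk; apply: hc.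
    apply: hI (mu_in hpg k) _ => j; rewrite ffunE.
    case: (eqVneq j k) => [->|//].
    by apply: leq_trans hk; apply: (leq_bigmax (F := d) k).
  have [q hq] := @stab n (Jt I d i) I (\max_(k < n) d k)
    (fun t c => @J_mono n I d hpg i t c) (fun t c => @I_J n I d hpg i t c) hB.
  exists q => t hqt c; rewrite !hIaJ; exact: hq.
move=> q hq c; split.
  move=> [k hk] i.
  have hJk : Jt I d i k c by apply: hk; apply: (mpow_pure hpg).
  have := (proj1 (hq i)) (maxn k (q i)) (leq_maxr _ _) c.
  move=> [H _]; apply: H; rewrite hIaJ.
  exact: (J_mono_le hpg (leq_maxl _ _) hJk).
move=> hc.
apply: (RR_of_J hn hI hpg hgood (t := (\sum_i q i).+1)) => // i.
have := proj1 (hIaJ i (q i) c) (hc i).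
apply: J_mono_le => //; rewrite ltnW // ltnS.
by rewrite (bigD1 i) //= leq_addr.
Qed.
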